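(* Let $\Gamma$ be the integer Heisenberg group, with elements written $(a,b,c)$, and let $p\ge2$ be a prime. The map $\varphi_p(a,b,c)=(pa,pb,p^2c)$ is an injective homomorphism $\Gamma\to\Gamma$, and the chain $\Gamma_\ell=\varphi_p^\ell(\Gamma)=\{(p^\ell a,p^\ell b,p^{2\ell}c):a,b,c\in\mathbb{Z}\}$ satisfies: the normal core of $\Gamma_\ell$ is $C_\ell=\{(p^{2\ell}a,p^{2\ell}b,p^{2\ell}c)\}$; the profinite completion $\widehat{\Gamma}_\infty=\varprojlim\Gamma/C_\ell$ has Steinitz order $p^\infty$; and although each quotient $\Gamma_\ell/C_\ell$ is nontrivial for $\ell>0$, the discriminant $D_\infty=\varprojlim\Gamma_\ell/C_\ell$ is the trivial group.
   Context: The integer Heisenberg group consists of the matrices $\begin{pmatrix}1&a&c\\0&1&b\\0&0&1\end{pmatrix}$, $a,b,c\in\mathbb{Z}$, denoted $(a,b,c)$; the product is $(a,b,c)(a',b',c')=(a+a',b+b',c+c'+ab')$. The normal core of a subgroup $H$ is $\bigcap_{g\in\Gamma}gHg^{-1}$. For a descending chain $\Gamma_\ell$ of finite-index subgroups with cores $C_\ell$, the discriminant is $D_\infty=\varprojlim\{\Gamma_{\ell+1}/C_{\ell+1}\to\Gamma_\ell/C_\ell\}\subset\widehat{\Gamma}_\infty$, with the maps induced by inclusion. The Steinitz order of a profinite group $\mathfrak{G}$ is $\mathrm{lcm}\{\#\mathfrak{G}/\mathfrak{N}:\mathfrak{N}\text{ open normal}\}$ as a supernatural number. *)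

(* Defs.v *)
From mathcomp Require Import all_boot all_algebra.
Set Implicit Arguments. Unset Strict Implicit. Unset Printing Implicit Defensive.
Import GRing.Theory Num.Theory.
Local Open Scope ring_scope.

(** The integer Heisenberg group: (a,b,c) stands for [[1,a,c],[0,1,b],[0,0,1]]. *)
Definition heis := (int * int * int)%type.

Definition hmul (x y : heis) : heis :=
  let: (a, b, c) := x in let: (a', b', c') := y in (a + a', b + b', c + c' + a * b').
Definition hone : heis := (0, 0, 0).
Definition hinv (x : heis) : heis := let: (a, b, c) := x in (- a, - b, - c + a * b).

Definition phi (p : nat) (x : heis) : heis :=
  let: (a, b, c) := x in (p%:Z * a, p%:Z * b, (p%:Z ^+ 2) * c).

Definition Gam (p l : nat) (y : heis) : Prop := exists x, y = iter l (phi p) x.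

(** Normal core of a subgroup H: intersection of all g H g^{-1}
    (x \in g H g^{-1} iff g^{-1} x g \in H). *)
Definition core (H : heis -> Prop) (x : heis) : Prop :=
  forall g, H (hmul (hmul (hinv g) x) g).

(** Inverse limits of the quotients G_l / C_l (left cosets x C_l), elements
    being represented by compatible sequences of representatives x : nat -> heis.
    The bonding map sends x C_{l+1} to x C_l, so compatibility reads
    x_l^{-1} x_{l+1} \in C_l. *)
Definition compat (C : nat -> heis -> Prop) (x : nat -> heis) : Prop :=
  forall l, C l (hmul (hinv (x l)) (x l.+1)).

Definition lim_eq (C : nat -> heis -> Prop) (x y : nat -> heis) : Prop :=
  forall l, C l (hmul (hinv (x l)) (y l)).

Definition smul (x y : nat -> heis) : nat -> heis := fun l => hmul (x l) (y l).
Definition sinv (x : nat -> heis) : nat -> heis := fun l => hinv (x l).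
Definition sone : nat -> heis := fun _ => hone.

(** A subgroup of an inverse limit of finite discrete groups is open iff it
    contains one of the basic open neighbourhoods of the identity, namely the
    kernel of a projection to Gamma / C_l. *)
Definition open_normal (C : nat -> heis -> Prop) (N : (nat -> heis) -> Prop) : Prop :=
  (forall x, N x -> compat C x) /\
  (forall x y, compat C y -> lim_eq C x y -> N x -> N y) /\
  N sone /\
  (forall x y, N x -> N y -> N (smul x y)) /\
  (forall x, N x -> N (sinv x)) /\
  (forall g x, compat C g -> N x -> N (smul (smul (sinv g) x) g)) /\
  (exists l, forall x, compat C x -> C l (x l) -> N x).

Definition has_index (C : nat -> heis -> Prop) (N : (nat -> heis) -> Prop) (n : nat) : Prop :=
  exists t : 'I_n -> (nat -> heis),
    (forall i, compat C (t i)) /\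
    (forall g, compat C g -> exists! i : 'I_n, N (smul (sinv (t i)) g)).

Definition completion_indices (C : nat -> heis -> Prop) (n : nat) : Prop :=
  exists N, open_normal C N /\ has_index C N n.

(** Supernatural numbers: prime q |-> exponent in nat or infinity (None). *)
Definition supernat := nat -> option nat.

Definition is_supernat_lcm (S : nat -> Prop) (s : supernat) : Prop :=
  forall q, prime q ->
    match s q with
    | None => forall e, exists n, S n /\ (e <= logn q n)%N
    | Some e => (forall n, S n -> (logn q n <= e)%N) /\
                (forall e', (forall n, S n -> (logn q n <= e')%N) -> (e <= e')%N)
    end.

Definition completion_steinitz (C : nat -> heis -> Prop) (s : supernat) : Prop :=
  is_supernat_lcm (completion_indices C) s.

Definition p_infty (p : nat) : supernat := fun q => if q == p then None else Some 0%N.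

(** Discriminant D_oo = lim G_l / C_l (maps induced by inclusion) is trivial:
    every compatible sequence with x_l \in G_l represents the identity. *)
Definition discriminant_trivial (G C : nat -> heis -> Prop) : Prop :=
  forall x : nat -> heis, compat C x -> (forall l, G l (x l)) -> forall l, C l (x l).

(* Main.v *)
Require Import Defs.
From mathcomp Require Import all_boot all_order all_algebra all_fingroup all_solvable ring.
From Stdlib Require Import ClassicalEpsilon.
Import Order.TTheory GRing.Theory Num.Theory.
Local Open Scope ring_scope.

Ltac hdes := repeat match goal with
  | x : heis |- _ => let a := fresh "a" in let b := fresh "b" in let c := fresh "c" in
      case: x => [[a b] c] end.
Ltac hring := hdes; rewrite /hmul /hinv /hone /=; congr (_,_,_); ring.

Lemma hmulA x y z : hmul (hmul x y) z = hmul x (hmul y z). Proof. hring. Qed.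

Definition Dv (p l : nat) (y : heis) : bool :=
  [&& ((p ^ (2 * l))%N%:Z %| y.1.1)%Z, ((p ^ (2 * l))%N%:Z %| y.1.2)%Z
    & ((p ^ (2 * l))%N%:Z %| y.2)%Z].

Lemma iter_phi p l a b c : iter l (phi p) (a, b, c) =
  ((p ^ l)%N%:Z * a, (p ^ l)%N%:Z * b, (p ^ (2 * l))%N%:Z * c).
Proof.
elim: l => [|l IH] /=; first by rewrite !mul1r.
rewrite IH /phi -!natz !natrX mulnS !exprS; congr (_,_,_); ring.
Qed.

Lemma GamE p l y : Gam p l y <->
  exists a b c : int, y = ((p ^ l)%N%:Z * a, (p ^ l)%N%:Z * b, (p ^ (2 * l))%N%:Z * c).
Proof.
split=> [[x ->]|[a [b [c ->]]]].
  by case: x => [[a b] c]; rewrite iter_phi; exists a, b, c.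
by exists (a, b, c); rewrite iter_phi.
Qed.

Lemma GamE2 p l y : Gam p l y <->
  [&& ((p ^ l)%N%:Z %| y.1.1)%Z, ((p ^ l)%N%:Z %| y.1.2)%Z & ((p ^ (2 * l))%N%:Z %| y.2)%Z].
Proof.
rewrite GamE; split=> [[a [b [c ->]]]|].
  by rewrite /= !dvdz_mulr.
case: y => [[a b] c] /= /and3P[/dvdzP[a' ->] /dvdzP[b' ->] /dvdzP[c' ->]].
by exists a', b', c'; congr (_,_,_); ring.
Qed.

Lemma conjE (g y : heis) : hmul (hmul (hinv g) y) g =
  (y.1.1, y.1.2, y.2 - g.1.1 * y.1.2 + y.1.1 * g.1.2).
Proof. hring. Qed.

Lemma dvd_ll p l : ((p ^ l)%N%:Z %| (p ^ (2 * l))%N%:Z)%Z.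
Proof. by rewrite dvdzE !absz_nat dvdn_exp2l // leq_pmull. Qed.

Lemma coreE p l y : core (Gam p l) y <-> Dv p l y.
Proof.
split.
  move=> H.
  have h0 := H hone; rewrite conjE GamE2 /= in h0.
  have h1 := H (0, 1, 0); rewrite conjE GamE2 /= in h1.
  have h2 := H (-1, 0, 0); rewrite conjE GamE2 /= in h2.
  case/and3P: h0 => _ _ hc.
  case/and3P: h1 => _ _ ha. case/and3P: h2 => _ _ hb.
  rewrite mul0r mulr0 subr0 addr0 in hc.
  rewrite mul0r subr0 mulr1 in ha. rewrite mulr0 addr0 mulN1r opprK in hb.
  apply/and3P; split=> //.
    by rewrite -(rpredDl _ hc).
  by rewrite -(rpredDl _ hc).
move=> /and3P[ha hb hc] g; rewrite conjE GamE2 /=.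
apply/and3P; split.
- exact: dvdz_trans (dvd_ll p l) ha.
- exact: dvdz_trans (dvd_ll p l) hb.
- by rewrite rpredD ?(rpredB hc) ?(dvdz_mull _ hb) ?(dvdz_mulr _ ha).
Qed.

Lemma hmulVl x : hmul (hinv x) x = hone. Proof. hring. Qed.
Lemma idM x y x' y' : hmul (hinv (hmul x y)) (hmul x' y') =
  hmul (hmul (hmul (hinv y) (hmul (hinv x) x')) y) (hmul (hinv y) y'). Proof. hring. Qed.
Lemma idV x x' : hmul (hinv (hinv x)) (hinv x') =
  hmul (hmul (hinv (hinv x)) (hinv (hmul (hinv x) x'))) (hinv x). Proof. hring. Qed.
Lemma idC a b c : hmul (hinv a) c = hmul (hmul (hinv a) b) (hmul (hinv b) c). Proof. hring. Qed.
Lemma idD a b : a = hmul b (hinv (hmul (hinv a) b)). Proof. hring. Qed.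

Lemma Dmono p l m y : (l <= m)%N -> Dv p m y -> Dv p l y.
Proof.
move=> lm /and3P[ha hb hc].
have d : ((p ^ (2 * l))%N%:Z %| (p ^ (2 * m))%N%:Z)%Z.
  by rewrite dvdzE !absz_nat dvdn_exp2l // leq_mul2l lm orbT.
by apply/and3P; split; apply: dvdz_trans d _.
Qed.

Lemma D1 p l : Dv p l hone.
Proof. by apply/and3P; split; rewrite /= dvdz0. Qed.

Lemma DM p l x y : Dv p l x -> Dv p l y -> Dv p l (hmul x y).
Proof.
case: x => [[a b] c]; case: y => [[a' b'] c'] /and3P[/= ha hb hc] /and3P[/= ha' hb' hc'].
by apply/and3P; split; rewrite /= ?rpredD // dvdz_mull.
Qed.

Lemma DV p l x : Dv p l x -> Dv p l (hinv x).
Proof.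
case: x => [[a b] c] /and3P[/= ha hb hc].
by apply/and3P; split; rewrite /= ?rpredN ?rpredD ?rpredN // dvdz_mulr.
Qed.

Lemma DJ p l g x : Dv p l x -> Dv p l (hmul (hmul (hinv g) x) g).
Proof.
rewrite conjE => /and3P[ha hb hc]; apply/and3P; split => //=.
by rewrite rpredD ?(rpredB hc) ?(dvdz_mull _ hb) ?(dvdz_mulr _ ha).
Qed.

Definition cp p := compat (fun l => core (Gam p l)).

Lemma cpE p x : cp p x <-> forall l, Dv p l (hmul (hinv (x l)) (x l.+1)).
Proof. by split=> H l; apply/coreE; apply: H. Qed.

Lemma cp_const p h : cp p (fun _ => h).
Proof.
apply/cpE => l; rewrite hmulVl.
exact: D1.
Qed.

Lemma cpM p x y : cp p x -> cp p y -> cp p (smul x y).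
Proof.
move=> /cpE hx /cpE hy; apply/cpE => l; rewrite /smul.
rewrite idM.
by apply: DM; [apply: DJ|].
Qed.

Lemma cpV p x : cp p x -> cp p (sinv x).
Proof.
move=> /cpE hx; apply/cpE => l; rewrite /sinv.
rewrite idV.
by apply: DJ; apply: DV.
Qed.

Lemma cp_chain p x l m : cp p x -> (l <= m)%N -> Dv p l (hmul (hinv (x l)) (x m)).
Proof.
move=> /cpE hx; elim: m => [|m IH].
  rewrite leqn0 => /eqP ->; rewrite hmulVl.
  exact: D1.
rewrite leq_eqVlt => /orP[/eqP ->|lm].
  rewrite hmulVl. exact: D1.
rewrite (idC _ (x m)).
by apply: DM; [apply: IH|apply: Dmono (hx m)].
Qed.

Lemma disc p : discriminant_trivial (Gam p) (fun l => core (Gam p l)).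
Proof.
move=> x hx hG l; apply/coreE.
have h1 := @cp_chain p x l (l + l)%N hx (leq_addl l l).
have h2 : Dv p l (x (l + l)%N).
  have := hG (l + l)%N; rewrite GamE2 => /and3P[ha hb hc].
  have d1 : ((p ^ (2 * l))%N%:Z %| (p ^ (l + l))%N%:Z)%Z by rewrite mul2n addnn.
  have d2 : ((p ^ (2 * l))%N%:Z %| (p ^ (2 * (l + l)))%N%:Z)%Z.
    by rewrite dvdzE !absz_nat dvdn_exp2l // leq_mul2l leq_addl orbT.
  apply/and3P; split; [exact: dvdz_trans d1 ha| exact: dvdz_trans d1 hb| exact: dvdz_trans d2 hc].
suff: Dv p l (hmul (x (l + l)%N) (hinv (hmul (hinv (x l)) (x (l + l)%N)))) by rewrite -idD.
by apply: DM => //; apply: DV.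
Qed.

Lemma part6 p (hp : prime p) l : (0 < l)%N -> exists y, Gam p l y /\ ~ core (Gam p l) y.
Proof.
move=> l0; exists ((p ^ l)%N%:Z, 0, 0); split.
  by apply/GamE; exists 1, 0, 0; rewrite !mulr1 !mulr0.
rewrite coreE => /and3P[/= h _ _]; move: h.
rewrite dvdzE !absz_nat dvdn_Pexp2l ?prime_gt1 //.
by rewrite -{2}(mul1n l) ltn_geF // ltn_mul2r l0.
Qed.

Lemma a1M x y : (hmul x y).1.1 = x.1.1 + y.1.1. Proof. by hdes. Qed.
Lemma a1V x : (hinv x).1.1 = - x.1.1. Proof. by hdes. Qed.

Lemma Dv_a p l y : Dv p l y -> ((p ^ l)%N%:Z %| y.1.1)%Z.
Proof. by case/and3P=> h _ _; apply: dvdz_trans (dvd_ll p l) h. Qed.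

Definition Nset p e (x : nat -> heis) := cp p x /\ ((p ^ e)%N%:Z %| (x e).1.1)%Z.

Lemma Nset_open p e : open_normal (fun l => core (Gam p l)) (Nset p e).
Proof.
split; first by move=> x [].
split.
  move=> x y hy hxy [hx ha]; split=> //.
  have := @Dv_a p e _ (proj1 (coreE _ _ _) (hxy e)); rewrite a1M a1V => h.
  by have := rpredD ha h; rewrite addNKr.
split; first by split; [apply: cp_const| rewrite /sone /= dvdz0].
split.
  by move=> x y [hx ha] [hy hb]; split; [apply: cpM| rewrite /smul a1M rpredD].
split.
  by move=> x [hx ha]; split; [apply: cpV| rewrite /sinv a1V rpredN].
split.
  move=> g x hg [hx ha]; split; first by apply: cpM => //; apply: cpM => //; apply: cpV.
  by rewrite /smul /sinv !a1M a1V addrC addNKr.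
exists e => x hx /coreE hd; split=> //; exact: (@Dv_a p e _ hd).
Qed.

Lemma Nset_index p e (hp : prime p) : has_index (fun l => core (Gam p l)) (Nset p e) (p ^ e).
Proof.
have P0 : (0 < (p ^ e)%N%:Z) by rewrite ltz_nat expn_gt0 prime_gt0.
exists (fun i : 'I_(p ^ e) => fun _ : nat => ((i : nat)%:Z, 0, 0)); split.
  by move=> i; apply: cp_const.
move=> g hg.
set a := (g e).1.1.
have m0 : 0 <= (a %% (p ^ e)%N%:Z)%Z by rewrite modz_ge0 // gt_eqF.
have m1 : ((a %% (p ^ e)%N%:Z)%Z < (p ^ e)%N%:Z) by rewrite ltz_pmod.
have hi : (absz (a %% (p ^ e)%N%:Z)%Z < p ^ e)%N.
  by rewrite -ltz_nat gez0_abs.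
have key : forall j : 'I_(p ^ e), Nset p e (smul (sinv (fun=> ((j : nat)%:Z, 0, 0))) g)
    <-> (j : nat)%:Z = (a %% (p ^ e)%N%:Z)%Z.
  move=> j.
  have hcp : cp p (smul (sinv (fun=> ((j : nat)%:Z, 0, 0))) g).
    by apply: cpM => //; apply: cpV; apply: cp_const.
  split.
    case=> _; rewrite /smul /sinv a1M a1V /= => hd.
    have : (a == (j : nat)%:Z %[mod (p ^ e)%N%:Z])%Z.
      by rewrite eqz_mod_dvd addrC.
    by move/eqP => ->; rewrite modz_small // ltz_nat ltn_ord andbT.
  move=> hj; split=> //; rewrite /smul /sinv a1M a1V /=.
  by rewrite addrC -eqz_mod_dvd hj modz_mod.
exists (Ordinal hi); split.
  by apply/key; rewrite /= gez0_abs.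
move=> j /key hj; apply: val_inj => /=.
by apply/eqP; rewrite -eqz_nat hj gez0_abs.
Qed.

Lemma part5p p (hp : prime p) e : exists n,
  completion_indices (fun l => core (Gam p l)) n /\ (e <= logn p n)%N.
Proof.
exists (p ^ e)%N; split; last by rewrite pfactorK.
exists (Nset p e); split; [exact: Nset_open| exact: Nset_index].
Qed.

Definition hpow (x : heis) (m : nat) := iter m (fun z => hmul z x) hone.

Lemma hpowE a b c m : hpow (a, b, c) m =
  (m%:Z * a, m%:Z * b, m%:Z * c + ('C(m, 2))%:Z * a * b).
Proof.
elim: m => [|m IH]; first by rewrite /hpow /= !mul0r add0r.
rewrite /hpow iterS -/(hpow _ _) IH /hmul binS bin1 PoszD intS; congr (_,_,_); ring.
Qed.

Lemma binP p L (hp : prime p) : (p ^ (2 * L) %| 'C(p ^ (2 * L).+1, 2))%N.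
Proof.
case: (even_prime hp) => [->|op].
  rewrite bin2 expnS -mulnA; set k := (_ * _.-1)%N; rewrite [(2 * k)%N]mul2n doubleK /k; exact: dvdn_mulr.
rewrite bin2odd; last by rewrite oddX op orbT.
by rewrite dvdn_mulr // expnS dvdn_mull.
Qed.

Lemma powD p L (hp : prime p) x : Dv p L (hpow x (p ^ (2 * L).+1)).
Proof.
case: x => [[a b] c]; rewrite hpowE.
have h1 : ((p ^ (2 * L))%N%:Z %| (p ^ (2 * L).+1)%N%:Z)%Z.
  by rewrite dvdzE !absz_nat expnS dvdn_mull.
have h2 : ((p ^ (2 * L))%N%:Z %| ('C(p ^ (2 * L).+1, 2))%N%:Z)%Z.
  by rewrite dvdzE !absz_nat binP.
by apply/and3P; split; rewrite /= ?rpredD ?dvdz_mulr.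
Qed.

Arguments cpM {p x y}. Arguments cpV {p x}.
Definition pb (P : Prop) : bool := if excluded_middle_informative P then true else false.
Lemma pbP P : reflect P (pb P).
Proof. rewrite /pb; case: excluded_middle_informative => h; constructor => //. Qed.

Lemma idI a b c d : hmul (hinv (hmul (hinv a) (hmul b c))) (hmul (hinv a) (hmul b d)) =
  hmul (hinv c) d. Proof. hring. Qed.
Lemma idK a b c d e : hmul (hmul (hinv a) (hmul b c)) (hmul (hinv c) (hmul d e)) =
  hmul (hinv a) (hmul (hmul b d) e). Proof. hring. Qed.
Lemma idO a : hone = hmul (hinv a) (hmul hone a). Proof. hring. Qed.
Lemma idO2 a : hone = hmul (hinv a) a. Proof. hring. Qed.
Lemma idJ a b : hmul (hmul (hinv a) b) a = hmul (hinv a) (hmul b a). Proof. hring. Qed.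
Lemma idT a b : hone = hmul (hinv a) (hmul (hmul a (hinv b)) b). Proof. hring. Qed.

Definition spow (g : nat -> heis) m := iter m (fun z => smul z g) sone.

Lemma spowE g m l : spow g m l = hpow (g l) m.
Proof. by elim: m => [|m IH] //=; rewrite /smul IH. Qed.

Lemma cp_spow p g m : cp p g -> cp p (spow g m).
Proof. move=> hg; elim: m => [|m IH] /=; [exact: cp_const| exact: cpM]. Qed.

Lemma index_pnat p (hp : prime p) N n :
  open_normal (fun l => core (Gam p l)) N -> has_index (fun l => core (Gam p l)) N n ->
  (0 < n)%N -> p.-nat n.
Proof.
move=> [Ncp [Nlim [N1 [NM [NV [NJ [L HL]]]]]]] [t [Ht Hu]] n0.
have Neq : forall x y, (forall l, x l = y l) -> cp p y -> N x -> N y.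
  move=> x y e hy; apply: Nlim => // l; rewrite e -idO2; apply/coreE; exact: D1.
have Nuniq : forall y j k, cp p y -> N (smul (sinv (t j)) y) -> N (smul (sinv (t k)) y) -> j = k.
  by move=> y j k hy hj hk; case: (Hu y hy) => i [_ U]; rewrite -(U j hj) -(U k hk).
pose i0 := Ordinal n0.
pose sig g i := epsilon (inhabits i0) (fun j => N (smul (sinv (t j)) (smul g (t i)))).
have sig_spec : forall g i, cp p g -> N (smul (sinv (t (sig g i))) (smul g (t i))).
  move=> g i hg; apply: (epsilon_spec (inhabits i0) (fun j => N (smul (sinv (t j)) (smul g (t i))))).
  by case: (Hu _ (cpM hg (Ht i))) => j [hj _]; exists j.
have sig_uniq : forall g i j, cp p g -> N (smul (sinv (t j)) (smul g (t i))) -> sig g i = j.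
  move=> g i j hg hj; apply: (Nuniq (smul g (t i))) => //; [exact: (cpM hg (Ht i))| exact: sig_spec].
have sig_inj : forall g, cp p g -> injective (sig g).
  move=> g hg i i' e.
  have h1 := sig_spec g i hg; have h2 := sig_spec g i' hg; rewrite e in h1.
  have h3 := NM _ _ (NV _ h1) h2.
  apply: (Nuniq (t i')); first exact: Ht.
    apply: Neq h3; first by move=> l; exact: idI.
    exact: (cpM (cpV (Ht i)) (Ht i')).
  apply: Neq N1; first by move=> l; exact: idO2.
  exact: (cpM (cpV (Ht i')) (Ht i')).
have sig_comp : forall g h i, cp p g -> cp p h -> sig g (sig h i) = sig (smul g h) i.
  move=> g h i hg hh; symmetry; apply: sig_uniq; first exact: cpM.
  have := NM _ _ (sig_spec g (sig h i) hg) (sig_spec h i hh).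
  apply: Neq; first by move=> l; exact: idK.
  exact: (cpM (cpV (Ht _)) (cpM (cpM hg hh) (Ht i))).
have sig_one : forall i, sig sone i = i.
  move=> i; apply: sig_uniq; first exact: cp_const.
  apply: Neq N1; first by move=> l; exact: idO.
  exact: (cpM (cpV (Ht i)) (cpM (cp_const p hone) (Ht i))).
pose M := (p ^ (2 * L).+1)%N.
have sig_pow : forall g i, cp p g -> sig (spow g M) i = i.
  move=> g i hg; apply: sig_uniq; first exact: (cp_spow p g M hg).
  have hN : N (spow g M).
    apply: HL; first exact: (cp_spow p g M hg).
    by apply/coreE; rewrite spowE; apply: powD.
  have := NJ _ _ (Ht i) hN; apply: Neq; first by move=> l; exact: idJ.
  exact: (cpM (cpV (Ht i)) (cpM (cp_spow p g M hg) (Ht i))).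
pose S := [set s : {perm 'I_n} | pb (exists g, cp p g /\ forall i, s i = sig g i)].
have gS : group_set S.
  apply/group_setP; split.
    rewrite inE; apply/pbP; exists sone; split; first exact: cp_const.
    by move=> i; rewrite perm1 sig_one.
  move=> s1 s2; rewrite !inE => /pbP[g1 [h1 e1]] /pbP[g2 [h2 e2]]; apply/pbP.
  exists (smul g2 g1); split; first exact: cpM.
  by move=> i; rewrite permM e1 e2 sig_comp.
pose G := Group gS.
have pG : (p.-group G)%g.
  apply/pgroupP => q pq qd; case: (Cauchy pq qd) => x xG ox.
  move: xG; rewrite inE => /pbP[g [hg eg]].
  have xk : forall k i, (x ^+ k)%g i = sig (spow g k) i.
    elim=> [|k IH] i; first by rewrite expg0 perm1 sig_one.
    by rewrite expgS permM eg IH sig_comp //; exact: (cp_spow p g k hg).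
  have : (x ^+ M == 1)%g by apply/eqP/permP => i; rewrite perm1 xk sig_pow.
  rewrite -order_dvdn ox /M Euclid_dvdX // andbT dvdn_prime2 //.
have orb : orbit 'P G i0 = [set: 'I_n].
  apply/setP => j; rewrite inE; apply/orbitP.
  pose g := smul (t j) (sinv (t i0)).
  have hg : cp p g := cpM (Ht j) (cpV (Ht i0)).
  exists (perm (sig_inj g hg)).
    rewrite inE; apply/pbP; exists g; split=> // i; exact: permE.
  rewrite /= apermE permE; apply: sig_uniq => //.
  apply: Neq N1; first by move=> l; exact: idT.
  exact: (cpM (cpV (Ht j)) (cpM hg (Ht i0))).
have : (n %| #|G|)%N.
  by rewrite -{1}(card_ord n) -cardsT -orb card_orbit dvdn_indexg.
move=> d; apply: pnat_dvd d _; by rewrite -pgroupE.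
Qed.

Theorem mainTheorem8 (p : nat) (hp : prime p) :
  (forall x y, phi p (hmul x y) = hmul (phi p x) (phi p y)) /\
      injective (phi p) /\
      (forall (l : nat) (y : heis), Gam p l y <->
         exists a b c : int, y = ((p ^ l)%N%:Z * a, (p ^ l)%N%:Z * b, (p ^ (2 * l))%N%:Z * c)) /\
      (forall (l : nat) (y : heis), core (Gam p l) y <->
         exists a b c : int,
           y = ((p ^ (2 * l))%N%:Z * a, (p ^ (2 * l))%N%:Z * b, (p ^ (2 * l))%N%:Z * c)) /\
      completion_steinitz (fun l => core (Gam p l)) (p_infty p) /\
      (forall l : nat, (0 < l)%N -> exists y, Gam p l y /\ ~ core (Gam p l) y) /\
      discriminant_trivial (Gam p) (fun l => core (Gam p l)).
Proof.
have p0 : p%:Z != 0 by rewrite eqz_nat -lt0n prime_gt0.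
split; first by move=> x y; hring.
split.
  move=> [[a b] c] [[a' b'] c'] [/(mulfI p0) -> /(mulfI p0) ->].
  by move/(mulfI (expf_neq0 2 p0)) ->.
split; first exact: GamE.
split.
  move=> l y; rewrite coreE; split.
    case: y => [[a b] c]; rewrite /Dv /= => /and3P[/dvdzP[a' ->] /dvdzP[b' ->] /dvdzP[c' ->]].
    by exists a', b', c'; congr (_,_,_); ring.
  by move=> [a [b [c ->]]]; apply/and3P; split; rewrite /= dvdz_mulr.
split.
  move=> q pq; rewrite /p_infty; case: eqP => [->|nq]; first exact: part5p.
  split=> // n [N [oN iN]].
  case: (posnP n) => [->|n0]; first by rewrite logn0.
  have pn := @index_pnat p hp N n oN iN n0.
  rewrite lognE; case: (boolP (q %| n)%N) => qd; last by rewrite !andbF.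
  have := pnat_dvd qd pn; rewrite pnatE // inE => /eqP qp.
  by case: nq.
split; first exact: part6.
exact: disc.
Qed.
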